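(* For all integers $k,l\ge1$, $La^*([k]\times[l],\vee_2)=k+l-1$.
   Context: $[k]\times[l]$ is ordered coordinatewise. $\vee_2$ is the poset on three elements $a,b_1,b_2$ whose only relations are $a<b_1$, $a<b_2$. For posets $P,R$, $P$ is a strong subposet of $R$ if there is an injection $i:P\to R$ with $p\le_P p'\iff i(p)\le_R i(p')$. A subset $F\subseteq Q$ is strong $P$-free if $P$ is not a strong subposet of $F$ with the induced order; $La^*(Q,P)$ is the maximum size of a strong $P$-free subset of $Q$. *)

(* Defs.v *)
From mathcomp Require Import all_boot all_order.
Set Implicit Arguments. Unset Strict Implicit. Unset Printing Implicit Defensive.

Definition grid_le (k l : nat) : rel ('I_k * 'I_l) :=
  fun x y => (x.1 <= y.1)%N && (x.2 <= y.2)%N.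

(* The poset vee_2 on three elements a = 0, b1 = 1, b2 = 2, whose only
   relations (besides reflexivity) are a < b1 and a < b2. *)
Definition vee2_le : rel 'I_3 :=
  fun p q => (p == q) || (nat_of_ord p == 0%N).

Definition strong_subposet (P R : finType) (leP : rel P) (leR : rel R)
    (F : {set R}) : Prop :=
  exists i : P -> R, injective i /\ (forall p, i p \in F) /\
    (forall p p', leP p p' = leR (i p) (i p')).

Definition strong_free (P R : finType) (leP : rel P) (leR : rel R)
    (F : {set R}) : Prop := ~ strong_subposet leP leR F.

(* La*(Q,P) = m  :  m is the maximum size of a strong P-free subset of Q. *)
Definition is_La_star (P R : finType) (leP : rel P) (leR : rel R) (m : nat)
  : Prop :=
  (exists F : {set R}, strong_free leP leR F /\ #|F| = m) /\
  (forall F : {set R}, strong_free leP leR F -> (#|F| <= m)%N).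

(* Main.v *)
Require Import Defs.
From mathcomp Require Import all_boot all_order.
From mathcomp Require Import zify.

Section Aux.
Variables k l : nat.

Definition noV (F : {set 'I_k * 'I_l}) := forall a b c, a \in F -> b \in F -> c \in F ->
  grid_le a b -> grid_le a c -> grid_le b c || grid_le c b.

Lemma grid_trans (a b c : 'I_k * 'I_l) : grid_le a b -> grid_le b c -> grid_le a c.
Proof. rewrite /grid_le => /andP[h1 h2] /andP[h3 h4]; apply/andP; lia. Qed.

Lemma grid_refl (a : 'I_k * 'I_l) : grid_le a a.
Proof. by rewrite /grid_le !leqnn. Qed.

Lemma free_noV F : strong_free vee2_le (@grid_le k l) F -> noV F.
Proof.
move=> Hf a b c aF bF cF ab ac; apply/negPn/negP; rewrite negb_or => /andP[nbc ncb].
apply: Hf.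
have ba : grid_le b a = false.
  by apply/negP => ba; move/negP: nbc; apply; apply: grid_trans ba ac.
have ca : grid_le c a = false.
  by apply/negP => ca; move/negP: ncb; apply; apply: grid_trans ca ab.
have nab : a <> b by move=> E; move/negP: nbc; apply; rewrite -E.
have nac : a <> c by move=> E; move/negP: ncb; apply; rewrite -E.
have nbc' : b <> c by move=> E; move/negP: nbc; apply; rewrite E grid_refl.
exists (fun p : 'I_3 => if val p == 0 then a else if val p == 1 then b else c).
split; last split.
- move=> [[|[|[|p]]] Hp] //; move=> [[|[|[|q]]] Hq] //= E; try (by apply/val_inj);
    try (by exfalso; auto).
- by move=> p; case: ifP => _ //; case: ifP.
- move=> [[|[|[|p]]] Hp] //; move=> [[|[|[|q]]] Hq] //=;
    rewrite /vee2_le /= ?grid_refl ?ab ?ac ?ba ?ca //; apply/esym/negbTE => //.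
Qed.

Lemma noV_sub (F G : {set _}) : noV F -> G \subset F -> noV G.
Proof.
move=> H /subsetP s a b c aG bG cG; apply: H; exact: s.
Qed.

Lemma claim n (F : {set 'I_k * 'I_l}) : #|F| <= n -> noV F -> F != set0 ->
  #|F| < #|[set x.1 | x in F]| + #|[set x.2 | x in F]|.
Proof.
elim: n F => [|n IH] F Hn HV Hne.
  by move: Hne; rewrite -card_gt0; lia.
case/set0Pn: Hne => x0 x0F.
case: (@arg_minnP _ x0 (mem F) (fun x => val x.1) x0F) => m mF mmin.
have {}mF : m \in F := mF.
set i0 := m.1.
set D := [set x : 'I_k * 'I_l | x.1 == i0].
set C := F :&: D.
have mC : m \in C by rewrite !inE mF eqxx.
case: (@arg_maxnP _ m (mem C) (fun x => val x.2) mC) => t tC tmax.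
have {}tC : t \in C := tC.
set F' := F :\: D.
have cardF : #|F| = #|C| + #|F'| by rewrite cardsID.
have injC : {in C &, injective (fun x : 'I_k * 'I_l => x.2)}.
  move=> [x1 x2] [y1 y2]; rewrite !inE /= => /andP[_ /eqP e1] /andP[_ /eqP e2] e.
  by rewrite e1 e2 e.
have cardsC : #|[set x.2 | x in C]| = #|C| := card_in_imset injC.
have CF : C \subset F by apply: subsetIl.
have fst1 : 0 < #|[set x.1 | x in F]|.
  by rewrite card_gt0; apply/set0Pn; exists m.1; apply: imset_f.
case: (eqVneq F' set0) => [F'0 | F'ne].
  rewrite F'0 cards0 addn0 in cardF.
  have : #|[set x.2 | x in C]| <= #|[set x.2 | x in F]|.
    by apply: subset_leq_card; apply: imsetS.
  lia.
have C1 : 0 < #|C| by rewrite card_gt0; apply/set0Pn; exists m.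
have F'F : F' \subset F by apply: subsetDl.
have IH' := IH F' ltac:(lia) (noV_sub F F' HV F'F) F'ne.
have fstlt : #|[set x.1 | x in F']| < #|[set x.1 | x in F]|.
  apply: proper_card; apply/properP; split; first by apply: imsetS.
  exists i0; first by apply: imset_f.
  apply/imsetP => [[y]]; rewrite inE => /andP[yD yF] e.
  by move: yD; rewrite inE e eqxx.
have Ct : #|C :\ t| = #|C| - 1 by rewrite (cardsD1 t C) tC; lia.
have cardsCt : #|[set x.2 | x in C :\ t]| = #|C :\ t|.
  apply: card_in_imset => x y xC yC; apply: injC.
  - by move: xC; rewrite inE => /andP[].
  - by move: yC; rewrite inE => /andP[].
have disj : [set x.2 | x in F'] :&: [set x.2 | x in C :\ t] = set0.
  apply/setP => s; rewrite !inE; apply/negbTE/negP => /andP[/imsetP[y yF' ->]].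
  case/imsetP => x xCt e.
  move: yF'; rewrite !inE => /andP[yD yF].
  move: xCt; rewrite !inE => /andP[xt /andP[xF xD]].
  have my := mmin y yF. have mx := mmin x xF.
  have xC : x \in C by rewrite !inE xF xD.
  have tx := tmax x xC.
  have tC' := tC; rewrite !inE in tC'; case/andP: tC' => tF tD.
  have := HV x y t xF yF tF.
  move: xD tD yD xt; rewrite /grid_le ?inE => /eqP xD /eqP tD yD xt.
  have ne2 : val x.2 != val t.2.
    apply: contra xt => /eqP /val_inj e2; apply/eqP; exact: injC.
  rewrite -e xD tD /= => H.
  have yn : (nat_of_ord y.1 != nat_of_ord i0) by apply: contra yD => /eqP/val_inj ->.
  rewrite -e in ne2 tx.
  have my' : (nat_of_ord i0 <= nat_of_ord y.1) := my.
  have tx' : (nat_of_ord y.2 <= nat_of_ord t.2) := tx.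
  have ne' : (nat_of_ord y.2 != nat_of_ord t.2) := ne2.
  move: H my' tx' ne' yn.
  move: (nat_of_ord y.1) (nat_of_ord i0) (nat_of_ord y.2) (nat_of_ord t.2) => a b c d.
  clear; lia.
have sub : [set x.2 | x in F'] :|: [set x.2 | x in C :\ t] \subset [set x.2 | x in F].
  rewrite subUset; apply/andP; split; apply: imsetS => //.
  by apply: subset_trans CF; apply: subsetDl.
have := subset_leq_card sub; rewrite cardsU disj cards0.
lia.
Qed.
End Aux.

Theorem theorem1p5 (k l : nat) (hk : (1 <= k)%N) (hl : (1 <= l)%N) :
  is_La_star vee2_le (@grid_le k l) (k + l - 1).
Proof.
split; last first.
  move=> F /free_noV HV; case: (eqVneq F set0) => [->|Fne]; first by rewrite cards0.
  have := @claim k l #|F| F (leqnn _) HV Fne.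
  have h1 : #|[set x.1 | x in F]| <= k by rewrite -[X in _ <= X]card_ord; apply: max_card.
  have h2 : #|[set x.2 | x in F]| <= l by rewrite -[X in _ <= X]card_ord; apply: max_card.
  move=> H; have h3 := leq_trans H (leq_add h1 h2); rewrite -ltnS; apply: leq_trans h3 _; lia.
case: k hk => [//|k] _; case: l hl => [//|l] _.
pose f (t : 'I_(k.+1 + l.+1 - 1)) : 'I_k.+1 * 'I_l.+1 :=
  if (t < k.+1)%N then (inord t, ord0) else (ord_max, inord (t - k)).
have vf : forall t, nat_of_ord (f t).1 = (if (t < k.+1)%N then nat_of_ord t else k) /\ nat_of_ord (f t).2 = (if (t < k.+1)%N then 0 else t - k).
  move=> t; rewrite /f; case: ifP => h /=; rewrite ?inordK //; have := ltn_ord t; lia.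
have finj : injective f.
  move=> t t' e; apply/val_inj => /=.
  have [a1 a2] := vf t; have [b1 b2] := vf t'.
  move: (congr1 (fun x => nat_of_ord x.1) e) (congr1 (fun x => nat_of_ord x.2) e) => /=.
  rewrite a1 a2 b1 b2; case: ifP; case: ifP; lia.
exists (f @: setT); split; last by rewrite card_imset // cardsT card_ord.
move=> [i [inj [iF ile]]].
have cmp : forall x y, x \in f @: setT -> y \in f @: setT -> grid_le x y || grid_le y x.
  move=> x y /imsetP[t _ ->] /imsetP[t' _ ->].
  have [a1 a2] := vf t; have [b1 b2] := vf t'.
  rewrite /grid_le a1 a2 b1 b2; have := ltn_ord t; have := ltn_ord t'.
  case: ifP; case: ifP; lia.
have := cmp _ _ (iF (inord 1)) (iF (inord 2)).
rewrite -!ile /vee2_le.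
have E1 : nat_of_ord (inord 1 : 'I_3) = 1 by rewrite inordK.
have E2 : nat_of_ord (inord 2 : 'I_3) = 2 by rewrite inordK.
rewrite E1 E2 /=.
have -> : (inord 1 == inord 2 :> 'I_3) = false by apply/negbTE; apply/negP => /eqP /(congr1 val); rewrite /= E1 E2.
have -> : (inord 2 == inord 1 :> 'I_3) = false by apply/negbTE; apply/negP => /eqP /(congr1 val); rewrite /= E1 E2.
done.
Qed.
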